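(* Let $R$ be a ring, $S=\mathrm{Spec}\,R$, $A$ a finite abelian group, and $\pi\colon X\to S$ a $D(A)$-cover all of whose line bundles $\mathcal{L}_\lambda$ are trivial, with chosen generators $v_\lambda$ of $\mathcal{L}_\lambda$ ($v_0=1$) so that $v_\lambda v_{\lambda'}=s_{\lambda,\lambda'}v_{\lambda+\lambda'}$ with $s_{\lambda,\lambda'}\in R$. Then $X$ is the spectrum of $$R[\{v_\lambda\}_{\lambda\in A}]/(\{v_\lambda v_{\lambda'}-s_{\lambda,\lambda'}v_{\lambda+\lambda'}\}_{\lambda,\lambda'\in A}),$$ and the discriminant ideal of $\pi$ is $$d(\pi)=\Big(|A|^{|A|}\prod_{\lambda\in A}s_{\lambda,-\lambda}\Big).$$
   Context: A $D(A)$-cover is a finite locally free $f\colon X\to S$ with an action of $D(A)=\mathrm{Spec}\,\mathcal{O}_S[A]$ such that fppf locally $f_*\mathcal{O}_X$ is the regular representation as a comodule; equivalently $f_*\mathcal{O}_X=\bigoplus_{\lambda\in A}\mathcal{L}_\lambda$ with line bundles $\mathcal{L}_\lambda$, $\mathcal{L}_0=\mathcal{O}_S$, and multiplication maps $\mathcal{L}_\lambda\otimes\mathcal{L}_{\lambda'}\to\mathcal{L}_{\lambda+\lambda'}$. The discriminant ideal $d(\pi)$ is the ideal generated by the determinant of the trace pairing $(x,y)\mapsto\mathrm{Tr}(xy)$ of the finite free algebra $\mathcal{O}_X$ over $R$ (locally, in general). *)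

(* Defs.v *)
From HB Require Import structures.
From mathcomp Require Import all_boot all_order all_algebra.
Set Implicit Arguments. Unset Strict Implicit. Unset Printing Implicit Defensive.
Import GRing.Theory.
Local Open Scope ring_scope.

(* A D(A)-cover of Spec R with trivial line bundles L_lambda = R v_lambda is
   an R-algebra B which is free with basis (v_lambda)_{lambda in A}.
   [crd b lambda] is the lambda-th coordinate of b in that basis. *)

Definition trace_wrt (R : comNzRingType) (A : finType) (B : comAlgType R)
  (v : A -> B) (crd : B -> A -> R) (b : B) : R :=
  \sum_(l : A) crd (b * v l) l.

(* determinant of the trace pairing (x,y) |-> Tr(xy) in the basis v;
   the discriminant ideal d(pi) is the ideal generated by this element *)
Definition disc_wrt (R : comNzRingType) (A : finType) (B : comAlgType R)
  (v : A -> B) (crd : B -> A -> R) : R :=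
  \det (\matrix_(i < #|A|, j < #|A|)
          trace_wrt v crd (v (enum_val i) * v (enum_val j))).

Definition same_principal_ideal (R : comNzRingType) (a b : R) : Prop :=
  (exists x, a = x * b) /\ (exists y, b = y * a).

(* Main.v *)
Require Import Defs.
From HB Require Import structures.
From mathcomp Require Import all_boot all_order all_algebra fingroup perm.
Set Implicit Arguments. Unset Strict Implicit. Unset Printing Implicit Defensive.
Import GRing.Theory.
Local Open Scope ring_scope.

Section Cov.
Variables (R : comNzRingType) (A : finZmodType) (B : comAlgType R)
  (v : A -> B) (crd : B -> A -> R) (s : A -> A -> R)
  (Hspan : forall b : B, b = \sum_(l : A) crd b l *: v l)
  (Hfree : forall c : A -> R, \sum_(l : A) c l *: v l = 0 -> forall l, c l = 0)
  (Hv0 : v 0 = 1)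
  (Hmul : forall l l' : A, v l * v l' = s l l' *: v (l + l')).

Lemma crdE (c : A -> R) l0 : crd (\sum_(l : A) c l *: v l) l0 = c l0.
Proof.
set b := \sum_l _.
have H : \sum_(l : A) (crd b l - c l) *: v l = 0.
  under eq_bigr do rewrite scalerBl.
  by rewrite sumrB -Hspan subrr.
by apply/eqP; rewrite -subr_eq0; apply/eqP; apply: (Hfree H).
Qed.

Lemma crdD b b' l : crd (b + b') l = crd b l + crd b' l.
Proof.
rewrite {1}(Hspan b) {1}(Hspan b') -big_split /=.
under eq_bigr do rewrite -scalerDl.
by rewrite crdE.
Qed.

Lemma crdZ (a : R) b l : crd (a *: b) l = a * crd b l.
Proof.
rewrite {1}(Hspan b) scaler_sumr.
under eq_bigr do rewrite scalerA.
by rewrite crdE.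
Qed.

Lemma crd_v (r : R) k l : crd (r *: v k) l = if l == k then r else 0.
Proof.
have -> : r *: v k = \sum_(l : A) (if l == k then r else 0) *: v l.
  rewrite (bigD1 k) //= eqxx big1 ?addr0 // => i /negbTE ->; by rewrite scale0r.
by rewrite crdE.
Qed.

Lemma s0 l : s 0 l = 1.
Proof.
have H : s 0 l *: v l = v l by rewrite -{2}(add0r l) -Hmul Hv0 mul1r.
by have := crd_v (s 0 l) l l; rewrite H -[v l]scale1r crd_v !eqxx.
Qed.

Variables (C : comAlgType R) (w : A -> C)
  (Hw0 : w 0 = 1) (Hwm : forall l l' : A, w l * w l' = s l l' *: w (l + l')).

Definition fmap (b : B) : C := \sum_(l : A) crd b l *: w l.

Lemma fmap_lin : linear fmap.
Proof.
move=> a b b'; rewrite /fmap scaler_sumr -big_split /=; apply: eq_bigr => l _.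
by rewrite crdD crdZ scalerDl scalerA.
Qed.

HB.instance Definition _ := GRing.isLinear.Build R B C *:%R fmap fmap_lin.

Lemma fmap_v l : fmap (v l) = w l.
Proof.
rewrite /fmap (bigD1 l) //= big1 ?addr0.
  by rewrite -[v l]scale1r crd_v eqxx scale1r.
by move=> i ne; rewrite -[v l]scale1r crd_v (negbTE ne) scale0r.
Qed.

Lemma fmap_mult : monoid_morphism fmap.
Proof.
split; first by rewrite -Hv0 fmap_v.
have fvv i j : fmap (v i * v j) = fmap (v i) * fmap (v j).
  by rewrite Hmul linearZ /= !fmap_v Hwm.
move=> b b'; move: (crd b) (crd b') (Hspan b) (Hspan b') => c c' -> ->.
rewrite mulr_suml !linear_sum /= mulr_suml; apply: eq_bigr => i _.
rewrite mulr_sumr !linear_sum /= mulr_sumr; apply: eq_bigr => j _.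
by rewrite -scalerAl -scalerAr !linearZ /= fvv -scalerAl -scalerAr.
Qed.

HB.instance Definition _ := GRing.isMonoidMorphism.Build B C fmap fmap_mult.

Definition fmorph : {lrmorphism B -> C} := fmap.

End Cov.

Lemma tr_vv (R : comNzRingType) (A : finZmodType) (B : comAlgType R)
  (v : A -> B) (crd : B -> A -> R) (s : A -> A -> R)
  (Hspan : forall b : B, b = \sum_(l : A) crd b l *: v l)
  (Hfree : forall c : A -> R, \sum_(l : A) c l *: v l = 0 -> forall l, c l = 0)
  (Hv0 : v 0 = 1)
  (Hmul : forall l l' : A, v l * v l' = s l l' *: v (l + l')) i j :
  trace_wrt v crd (v i * v j) = if i + j == 0 then s i j * #|A|%:R else 0.
Proof.
rewrite /trace_wrt.
under eq_bigr do rewrite Hmul -scalerAl Hmul scalerA (crd_v Hspan Hfree).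
case: eqP => [e|ne].
  under eq_bigr do rewrite e add0r eqxx (s0 Hspan Hfree Hv0 Hmul) mulr1.
  by rewrite sumr_const mulr_natr.
rewrite big1 // => l _; rewrite ifF //; apply/eqP => h; apply: ne.
by apply/esym/(addIr l); rewrite add0r -h.
Qed.


Theorem lemma2p27 (R : comNzRingType) (A : finZmodType) (B : comAlgType R)
  (v : A -> B) (crd : B -> A -> R) (s : A -> A -> R)
  (* v is an R-basis of B, with coordinate functional crd *)
  (Hspan : forall b : B, b = \sum_(l : A) crd b l *: v l)
  (Hfree : forall c : A -> R, \sum_(l : A) c l *: v l = 0 -> forall l, c l = 0)
  (Hv0 : v 0 = 1)
  (Hmul : forall l l' : A, v l * v l' = s l l' *: v (l + l')) :
  (* B is the R-algebra presented by generators v_l and relations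
     v_l v_l' = s_{l,l'} v_{l+l'} (with v_0 = 1): universal property *)
  (forall (C : comAlgType R) (w : A -> C),
      w 0 = 1 ->
      (forall l l' : A, w l * w l' = s l l' *: w (l + l')) ->
      exists f : {lrmorphism B -> C},
        (forall l, f (v l) = w l) /\
        (forall g : {lrmorphism B -> C}, (forall l, g (v l) = w l) -> g =1 f))
  /\
  (* d(pi) = ( |A|^|A| * prod_l s_{l,-l} ) *)
  same_principal_ideal (disc_wrt v crd)
    ((#|A|%:R) ^+ #|A| * \prod_(l : A) s l (- l)).
Proof.
split.
  move=> C w Hw0 Hwm.
  exists (fmorph Hspan Hfree Hv0 Hmul Hw0 Hwm); split.
    by move=> l; apply: (fmap_v Hspan Hfree).
  move=> g Hg b; rewrite (Hspan b) !linear_sum; apply: eq_bigr => l _.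
  by rewrite !linearZ /= Hg (fmap_v Hspan Hfree).
pose f (i : 'I_#|A|) := enum_rank (- enum_val i).
have finj : injective f.
  by move=> i j /enum_rank_inj /oppr_inj /enum_val_inj.
pose sg : 'S_(#|A|) := perm finj.
pose d : 'rV[R]_(#|A|) := \row_i (s (enum_val i) (- enum_val i) * #|A|%:R).
have M : (\matrix_(i < #|A|, j < #|A|)
          trace_wrt v crd (v (enum_val i) * v (enum_val j)))
         = diag_mx d *m perm_mx sg.
  apply/matrixP => i j; rewrite mul_diag_mx !mxE (tr_vv Hspan Hfree Hv0 Hmul).
  rewrite ?mxE permE /f addrC addr_eq0.
  case: eqP => [e|ne].
    by rewrite -e enum_valK eqxx mulr1 e.
  rewrite (_ : (_ == j) = false) ?mulr0 //; apply/eqP => h; apply: ne; by rewrite -h enum_rankK.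
have D : disc_wrt v crd =
   (#|A|%:R ^+ #|A| * \prod_(l : A) s l (- l)) * (-1) ^+ sg.
  rewrite /disc_wrt M det_mulmx det_perm det_diag; congr (_ * _).
  under eq_bigr do rewrite mxE.
  rewrite big_split /= prodr_const card_ord mulrC; congr (_ * _).
  by rewrite (big_enum_val (fun l => s l (- l))).
split; first by exists ((-1) ^+ sg); rewrite D mulrC.
by exists ((-1) ^+ sg); rewrite D [_ * (-1) ^+ sg]mulrC signrMK.
Qed.
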